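(* Let $X$ be a real Hilbert space, $I=\{1,\dots,m\}$, and $(T_i)_{i\in I}$ nonexpansive operators $X\to X$ with $Z_i=\operatorname{Fix}T_i$ and $Z=\bigcap_iZ_i$. Suppose there is $z\in Z$ such that each $T_i$ is projective with respect to $z$, and that $(Z_i)_{i\in I}$ is boundedly regular. Then $T=T_m\cdots T_2T_1$ is projective with respect to $z$, and for every $x_0\in X$ the sequence $(T^nx_0)_{n\in\mathbb N}$ converges strongly to some point of $Z$.
   Context: A nonexpansive $T$ with $z\in\operatorname{Fix}T$ is projective with respect to $z$ if for every bounded sequence $(x_n)$ with $\|x_n-z\|-\|Tx_n-z\|\to0$ we have $d_{\operatorname{Fix}T}(x_n)\to0$. A finite family $(C_i)$ of closed convex sets with $C=\bigcap_iC_i\ne\varnothing$ is boundedly regular if for every bounded sequence $(x_n)$, $\max_id_{C_i}(x_n)\to0$ implies $d_C(x_n)\to0$. *)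

(* Defs.v *)
From Stdlib Require Import Reals Lra List Classical ClassicalEpsilon.
Open Scope R_scope.

Record HilbertSpace := {
  hs_car :> Type;
  hs_zero : hs_car;
  hs_add : hs_car -> hs_car -> hs_car;
  hs_opp : hs_car -> hs_car;
  hs_scal : R -> hs_car -> hs_car;
  hs_inner : hs_car -> hs_car -> R;
  hs_add_assoc : forall x y z, hs_add x (hs_add y z) = hs_add (hs_add x y) z;
  hs_add_comm : forall x y, hs_add x y = hs_add y x;
  hs_add_0 : forall x, hs_add x hs_zero = x;
  hs_add_opp : forall x, hs_add x (hs_opp x) = hs_zero;
  hs_scal_assoc : forall a b x, hs_scal a (hs_scal b x) = hs_scal (a * b) x;
  hs_scal_1 : forall x, hs_scal 1 x = x;
  hs_scal_distr_l : forall a x y, hs_scal a (hs_add x y) = hs_add (hs_scal a x) (hs_scal a y);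
  hs_scal_distr_r : forall a b x, hs_scal (a + b) x = hs_add (hs_scal a x) (hs_scal b x);
  hs_inner_sym : forall x y, hs_inner x y = hs_inner y x;
  hs_inner_add_l : forall x y z, hs_inner (hs_add x y) z = hs_inner x z + hs_inner y z;
  hs_inner_scal_l : forall a x y, hs_inner (hs_scal a x) y = a * hs_inner x y;
  hs_inner_pos : forall x, 0 <= hs_inner x x;
  hs_inner_def : forall x, hs_inner x x = 0 -> x = hs_zero;
  hs_complete : forall u : nat -> hs_car,
    (forall eps, 0 < eps -> exists N, forall n m, (N <= n)%nat -> (N <= m)%nat ->
        sqrt (hs_inner (hs_add (u n) (hs_opp (u m))) (hs_add (u n) (hs_opp (u m)))) < eps) ->
    exists l, forall eps, 0 < eps -> exists N, forall n, (N <= n)%nat ->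
        sqrt (hs_inner (hs_add (u n) (hs_opp l)) (hs_add (u n) (hs_opp l))) < eps
}.

Section Defs.
Variable X : HilbertSpace.

Definition hsub (x y : X) : X := hs_add X x (hs_opp X y).
Definition hnorm (x : X) : R := sqrt (hs_inner X x x).

Lemma hnorm_nonneg (x : X) : 0 <= hnorm x.
Proof. unfold hnorm; apply sqrt_pos. Qed.

Definition dist_vals (C : X -> Prop) (x : X) (r : R) : Prop :=
  exists y, C y /\ r = - hnorm (hsub x y).

Lemma dist_vals_bound (C : X -> Prop) (x : X) : bound (dist_vals C x).
Proof.
  exists 0. intros r [y [_ ->]]. pose proof (hnorm_nonneg (hsub x y)). lra.
Qed.

Lemma dist_vals_ne (C : X -> Prop) (x : X) :
  (exists y, C y) -> exists r, dist_vals C x r.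
Proof. intros [y Hy]. exists (- hnorm (hsub x y)). exists y. auto. Qed.

(** d_C(x) = inf_{y in C} ||x - y|| (for nonempty C; set to 0 for empty C,
    which never occurs below). *)
Definition dist_set (C : X -> Prop) (x : X) : R :=
  match excluded_middle_informative (exists y, C y) with
  | left H => - proj1_sig (completeness (dist_vals C x) (dist_vals_bound C x)
                                        (dist_vals_ne C x H))
  | right _ => 0
  end.

Definition Fix (T : X -> X) : X -> Prop := fun x => T x = x.

Definition nonexpansive (T : X -> X) : Prop :=
  forall x y, hnorm (hsub (T x) (T y)) <= hnorm (hsub x y).

Definition bounded_seq (x : nat -> X) : Prop :=
  exists M, forall n, hnorm (x n) <= M.

Definition projective (T : X -> X) (z : X) : Prop :=
  nonexpansive T /\ Fix T z /\
  forall x : nat -> X, bounded_seq x ->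
    Un_cv (fun n => hnorm (hsub (x n) z) - hnorm (hsub (T (x n)) z)) 0 ->
    Un_cv (fun n => dist_set (Fix T) (x n)) 0.

Definition inter_family (m : nat) (C : nat -> X -> Prop) : X -> Prop :=
  fun x => forall i, (1 <= i <= m)%nat -> C i x.

Definition max_dist (m : nat) (C : nat -> X -> Prop) (x : X) : R :=
  fold_right Rmax 0 (map (fun i => dist_set (C i) x) (seq 1 m)).

Definition boundedly_regular (m : nat) (C : nat -> X -> Prop) : Prop :=
  forall x : nat -> X, bounded_seq x ->
    Un_cv (fun n => max_dist m C (x n)) 0 ->
    Un_cv (fun n => dist_set (inter_family m C) (x n)) 0.

Fixpoint comp_family (T : nat -> X -> X) (n : nat) : X -> X :=
  match n with
  | O => fun x => x
  | S k => fun x => T (S k) (comp_family T k x)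
  end.

Definition converges_to (u : nat -> X) (l : X) : Prop :=
  forall eps, 0 < eps -> exists N, forall n, (N <= n)%nat -> hnorm (hsub (u n) l) < eps.

End Defs.

Arguments hsub {X}.
Arguments hnorm {X}.
Arguments dist_set {X}.
Arguments Fix {X}.
Arguments nonexpansive {X}.
Arguments bounded_seq {X}.
Arguments projective {X}.
Arguments inter_family {X}.
Arguments max_dist {X}.
Arguments boundedly_regular {X}.
Arguments comp_family {X}.
Arguments converges_to {X}.

(* Main.v *)
Require Import Defs.
From Stdlib Require Import Reals Lra Psatz List Arith Lia Classical ClassicalEpsilon.
Open Scope R_scope.


Lemma add_0_l {X : HilbertSpace} (x : X) : hs_add X (hs_zero X) x = x.
Proof. rewrite hs_add_comm, hs_add_0. reflexivity. Qed.

Lemma opp_unique {X : HilbertSpace} (a v : X) :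
  hs_add X a v = hs_zero X -> a = hs_opp X v.
Proof.
  intros H. rewrite <- (hs_add_0 X a), <- (hs_add_opp X v), hs_add_assoc, H, add_0_l.
  reflexivity.
Qed.

Lemma opp_opp {X : HilbertSpace} (x : X) : hs_opp X (hs_opp X x) = x.
Proof. symmetry; apply opp_unique; apply hs_add_opp. Qed.

Lemma opp_zero {X : HilbertSpace} : hs_opp X (hs_zero X) = hs_zero X.
Proof. symmetry; apply opp_unique; apply hs_add_0. Qed.

Lemma sub_eq0 {X : HilbertSpace} (x y : X) : hsub x y = hs_zero X -> x = y.
Proof. unfold hsub; intro H. rewrite <- (opp_opp y). apply opp_unique; exact H. Qed.

Lemma sub_0 {X : HilbertSpace} (x : X) : hsub x (hs_zero X) = x.
Proof. unfold hsub; rewrite opp_zero, hs_add_0; reflexivity. Qed.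

Lemma sub_split {X : HilbertSpace} (x y z : X) :
  hsub x z = hs_add X (hsub x y) (hsub y z).
Proof.
  unfold hsub. rewrite <- hs_add_assoc. rewrite (hs_add_assoc _ (hs_opp X y) y).
  rewrite (hs_add_comm _ (hs_opp X y) y), hs_add_opp, add_0_l. reflexivity.
Qed.

Lemma scal_0 {X : HilbertSpace} (v : X) : hs_scal X 0 v = hs_zero X.
Proof.
  assert (H : hs_add X (hs_scal X 0 v) (hs_scal X 0 v) = hs_scal X 0 v).
  { rewrite <- hs_scal_distr_r. f_equal. ring. }
  rewrite <- (hs_add_opp X (hs_scal X 0 v)). rewrite <- H at 2.
  rewrite <- hs_add_assoc, hs_add_opp, hs_add_0. reflexivity.
Qed.

Lemma scal_m1 {X : HilbertSpace} (v : X) : hs_scal X (-1) v = hs_opp X v.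
Proof.
  apply opp_unique. rewrite <- (hs_scal_1 X v) at 2.
  rewrite <- hs_scal_distr_r. replace (-1 + 1) with 0 by ring. apply scal_0.
Qed.

Lemma inner_add_r {X : HilbertSpace} (x y z : X) :
  hs_inner X x (hs_add X y z) = hs_inner X x y + hs_inner X x z.
Proof. rewrite hs_inner_sym, hs_inner_add_l, (hs_inner_sym _ y), (hs_inner_sym _ z); ring. Qed.

Lemma inner_scal_r {X : HilbertSpace} a (x y : X) :
  hs_inner X x (hs_scal X a y) = a * hs_inner X x y.
Proof. rewrite hs_inner_sym, hs_inner_scal_l, hs_inner_sym; ring. Qed.

Lemma inner_zero_l {X : HilbertSpace} (y : X) : hs_inner X (hs_zero X) y = 0.
Proof. rewrite <- (scal_0 (hs_zero X)), hs_inner_scal_l; ring. Qed.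

Lemma expand {X : HilbertSpace} (a b : X) t :
  hs_inner X (hs_add X a (hs_scal X t b)) (hs_add X a (hs_scal X t b)) =
  hs_inner X a a + 2 * t * hs_inner X a b + t * t * hs_inner X b b.
Proof.
  rewrite hs_inner_add_l, !inner_add_r, !hs_inner_scal_l, !inner_scal_r,
    (hs_inner_sym _ b a); ring.
Qed.

Lemma CS {X : HilbertSpace} (a b : X) :
  hs_inner X a b * hs_inner X a b <= hs_inner X a a * hs_inner X b b.
Proof.
  set (aa := hs_inner X a a). set (bb := hs_inner X b b). set (ab := hs_inner X a b).
  assert (Ha : 0 <= aa) by apply hs_inner_pos.
  assert (Hb : 0 <= bb) by apply hs_inner_pos.
  destruct (Req_dec bb 0) as [E|E].
  - destruct (Req_dec ab 0) as [E2|E2].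
    + rewrite E2. nra.
    + set (t := - (aa + 1) / (2 * ab)).
      pose proof (hs_inner_pos X (hs_add X a (hs_scal X t b))) as P.
      rewrite expand in P. fold aa bb ab in P.
      assert (2 * t * ab = - (aa + 1)) by (unfold t; field; auto).
      rewrite E in P. nra.
  - assert (Hb' : 0 < bb) by lra.
    set (t := - ab / bb).
    pose proof (hs_inner_pos X (hs_add X a (hs_scal X t b))) as P.
    rewrite expand in P. fold aa bb ab in P.
    assert (Q : aa + 2 * t * ab + t * t * bb = aa - (ab * ab) / bb) by (unfold t; field; lra).
    rewrite Q in P.
    assert (R : (ab * ab) / bb * bb = ab * ab) by (field; lra).
    nra.
Qed.

Lemma norm_add {X : HilbertSpace} (a b : X) :
  hnorm (hs_add X a b) <= hnorm a + hnorm b.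
Proof.
  unfold hnorm.
  pose proof (sqrt_pos (hs_inner X a a)). pose proof (sqrt_pos (hs_inner X b b)).
  assert (Hs : 0 <= sqrt (hs_inner X a a) + sqrt (hs_inner X b b)) by lra.
  rewrite <- (sqrt_square _ Hs).
  apply sqrt_le_1_alt.
  pose proof (expand a b 1) as E. rewrite hs_scal_1 in E. rewrite E.
  pose proof (sqrt_sqrt _ (hs_inner_pos X a)). pose proof (sqrt_sqrt _ (hs_inner_pos X b)).
  pose proof (CS a b).
  assert (hs_inner X a b <= sqrt (hs_inner X a a) * sqrt (hs_inner X b b)).
  { set (p := sqrt (hs_inner X a a) * sqrt (hs_inner X b b)).
    assert (Pp : 0 <= p) by (unfold p; nra).
    assert (Q : hs_inner X a a * hs_inner X b b = p * p).
    { unfold p. rewrite <- H1 at 1. rewrite <- H2 at 1. ring. }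
    destruct (Rle_dec (hs_inner X a b) p) as [|Hn]; auto. exfalso.
    rewrite Q in H3. nra. }
  nra.
Qed.

Lemma tri {X : HilbertSpace} (x y z : X) :
  hnorm (hsub x z) <= hnorm (hsub x y) + hnorm (hsub y z).
Proof. rewrite (sub_split x y z). apply norm_add. Qed.

Lemma nsym {X : HilbertSpace} (x y : X) : hnorm (hsub x y) = hnorm (hsub y x).
Proof.
  assert (E : hsub y x = hs_scal X (-1) (hsub x y)).
  { unfold hsub. rewrite hs_scal_distr_l, !scal_m1, opp_opp, hs_add_comm. reflexivity. }
  rewrite E. unfold hnorm. f_equal. rewrite hs_inner_scal_l, inner_scal_r. ring.
Qed.

Lemma nself {X : HilbertSpace} (x : X) : hnorm (hsub x x) = 0.
Proof. unfold hnorm, hsub. rewrite hs_add_opp, inner_zero_l. apply sqrt_0. Qed.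

Lemma nzero {X : HilbertSpace} (x y : X) : hnorm (hsub x y) = 0 -> x = y.
Proof.
  unfold hnorm; intro H. apply sub_eq0. apply hs_inner_def.
  apply sqrt_eq_0; [apply hs_inner_pos | exact H].
Qed.

Lemma nbound {X : HilbertSpace} (w z : X) : hnorm w <= hnorm (hsub w z) + hnorm z.
Proof.
  rewrite <- (sub_0 w) at 1. rewrite <- (sub_0 z) at 2. apply tri.
Qed.

Lemma nbound2 {X : HilbertSpace} (w z : X) : hnorm (hsub w z) <= hnorm w + hnorm z.
Proof.
  pose proof (tri w (hs_zero X) z). rewrite sub_0 in H. rewrite (nsym (hs_zero X) z), sub_0 in H.
  exact H.
Qed.

Lemma dist_le {X : HilbertSpace} (C : X -> Prop) (x y : X) :
  C y -> dist_set C x <= hnorm (hsub x y).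
Proof.
  intro Hy. unfold dist_set.
  destruct (excluded_middle_informative _) as [H|H]; [| exfalso; eauto].
  destruct (completeness _ _ _) as [s [Hub Hl]]; simpl.
  assert (- hnorm (hsub x y) <= s) by (apply Hub; exists y; auto). lra.
Qed.

Lemma dist_ge0 {X : HilbertSpace} (C : X -> Prop) (x : X) :
  (exists y, C y) -> 0 <= dist_set C x.
Proof.
  intro Hne. unfold dist_set.
  destruct (excluded_middle_informative _) as [H|H]; [| exfalso; eauto].
  destruct (completeness _ _ _) as [s [Hub Hl]]; simpl.
  assert (s <= 0).
  { apply Hl. intros r [y [_ ->]]. pose proof (hnorm_nonneg _ (hsub x y)). lra. }
  lra.
Qed.

Lemma dist_approx {X : HilbertSpace} (C : X -> Prop) (x : X) eps :
  (exists y, C y) -> 0 < eps -> exists y, C y /\ hnorm (hsub x y) < dist_set C x + eps.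
Proof.
  intros Hne He. unfold dist_set.
  destruct (excluded_middle_informative _) as [H|H]; [| exfalso; eauto].
  destruct (completeness _ _ _) as [s [Hub Hl]]; simpl.
  apply NNPP; intro Hn.
  assert (s <= s - eps).
  { apply Hl. intros r [y [Cy ->]].
    destruct (Rlt_le_dec (hnorm (hsub x y)) (- s + eps)) as [Hlt|Hge].
    - exfalso; apply Hn; exists y; split; auto.
    - lra. }
  lra.
Qed.

Lemma dist_lip {X : HilbertSpace} (C : X -> Prop) (x y : X) :
  (exists p, C p) -> dist_set C x <= dist_set C y + hnorm (hsub x y).
Proof.
  intro Hne. apply Rle_plus_epsilon. intros eps He.
  destruct (dist_approx C y eps Hne He) as [p [Cp Hp]].
  pose proof (dist_le C x p Cp). pose proof (tri x y p). lra.
Qed.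

Lemma dist_mono {X : HilbertSpace} (C C' : X -> Prop) (x : X) :
  (exists p, C p) -> (forall p, C p -> C' p) -> dist_set C' x <= dist_set C x.
Proof.
  intros Hne Hs. apply Rle_plus_epsilon. intros eps He.
  destruct (dist_approx C x eps Hne He) as [p [Cp Hp]].
  pose proof (dist_le C' x p (Hs p Cp)). lra.
Qed.

Lemma step_bound {X : HilbertSpace} (T : X -> X) (z y : X) :
  nonexpansive T -> T z = z -> hnorm (hsub (T y) y) <= 2 * dist_set (Fix T) y.
Proof.
  intros Hn Hz. apply Rle_plus_epsilon. intros eps He.
  assert (Hne : exists p, Fix T p) by (exists z; exact Hz).
  destruct (dist_approx (Fix T) y (eps/2) Hne) as [p [Cp Hp]]; [lra|].
  pose proof (tri (T y) (T p) y). pose proof (Hn y p). unfold Fix in Cp. rewrite Cp in *.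
  rewrite (nsym p y) in *. lra.
Qed.

Lemma squeeze (u v : nat -> R) :
  (forall n, 0 <= u n <= v n) -> Un_cv v 0 -> Un_cv u 0.
Proof.
  intros H Hv eps He. destruct (Hv eps He) as [N HN]. exists N; intros n Hn.
  specialize (HN n Hn). specialize (H n). unfold R_dist, Rabs in *.
  destruct (Rcase_abs (u n - 0)), (Rcase_abs (v n - 0)); lra.
Qed.

Lemma cv_const0 : Un_cv (fun _ => 0) 0.
Proof. intros eps He. exists O. intros. unfold R_dist. rewrite Rminus_0_r, Rabs_R0. lra. Qed.

Lemma fold_max_nonneg (l : list R) : (forall a, In a l -> 0 <= a) -> 0 <= fold_right Rmax 0 l.
Proof.
  induction l as [|a l IH]; simpl; intros H. lra.
  pose proof (Rmax_l a (fold_right Rmax 0 l)). pose proof (H a (or_introl eq_refl)). lra.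
Qed.

Lemma max_cv (f : nat -> nat -> R) (l : list nat) :
  (forall i, In i l -> Un_cv (f i) 0 /\ forall n, 0 <= f i n) ->
  Un_cv (fun n => fold_right Rmax 0 (map (fun i => f i n) l)) 0.
Proof.
  induction l as [|a l IH]; simpl; intros H.
  - apply cv_const0.
  - destruct (H a (or_introl eq_refl)) as [Ha Ha0].
    assert (IH' := IH (fun i Hi => H i (or_intror Hi))).
    apply squeeze with (v := fun n => f a n + fold_right Rmax 0 (map (fun i => f i n) l)).
    + intro n. assert (0 <= fold_right Rmax 0 (map (fun i => f i n) l)).
      { apply fold_max_nonneg. intros b Hb. apply in_map_iff in Hb.
        destruct Hb as [i [<- Hi]]. apply (proj2 (H i (or_intror Hi))). }
      specialize (Ha0 n). split.
      * pose proof (Rmax_l (f a n) (fold_right Rmax 0 (map (fun i => f i n) l))). lra.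
      * apply Rmax_lub; lra.
    + pose proof (CV_plus _ _ _ _ Ha IH') as P. rewrite Rplus_0_r in P. exact P.
Qed.

Lemma comp_fix {X : HilbertSpace} (T : nat -> X -> X) (k : nat) (p : X) :
  (forall i, (1 <= i <= k)%nat -> T i p = p) -> comp_family T k p = p.
Proof.
  induction k as [|k IH]; simpl; intros H; auto.
  rewrite IH by (intros i Hi; apply H; lia). apply H; lia.
Qed.

Lemma comp_nonexp {X : HilbertSpace} (T : nat -> X -> X) (k : nat) :
  (forall i, (1 <= i <= k)%nat -> nonexpansive (T i)) -> nonexpansive (comp_family T k).
Proof.
  induction k as [|k IH]; simpl; intros H x y.
  - lra.
  - pose proof (H (S k) ltac:(lia) (comp_family T k x) (comp_family T k y)).
    pose proof (IH (fun i Hi => H i ltac:(lia)) x y). lra.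
Qed.

Lemma sq_abs (u : nat -> R) (d : R) :
  (forall n, 0 <= u n) -> Un_cv u 0 -> 0 < d -> exists N, forall n, (N <= n)%nat -> u n < d.
Proof.
  intros H0 Hc Hd. destruct (Hc d Hd) as [N HN]. exists N. intros n Hn.
  specialize (HN n Hn). specialize (H0 n). unfold R_dist, Rabs in HN.
  destruct (Rcase_abs (u n - 0)); lra.
Qed.

Lemma key (X : HilbertSpace) (m : nat) (T : nat -> X -> X) (z : X) :
  (forall i, (1 <= i <= m)%nat -> nonexpansive (T i)) ->
  inter_family m (fun i => Fix (T i)) z ->
  (forall i, (1 <= i <= m)%nat -> projective (T i) z) ->
  boundedly_regular m (fun i => Fix (T i)) ->
  forall x : nat -> X, bounded_seq x ->
  Un_cv (fun n => hnorm (hsub (x n) z) - hnorm (hsub (comp_family T m (x n)) z)) 0 ->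
  Un_cv (fun n => dist_set (inter_family m (fun i => Fix (T i))) (x n)) 0.
Proof.
  intros Hne Hz Hp Hr x [M HM] Hcv.
  set (a := fun k n => hnorm (hsub (comp_family T k (x n)) z)).
  assert (mono1 : forall k n, (S k <= m)%nat -> a (S k) n <= a k n).
  { intros k n Hk. unfold a. simpl.
    pose proof (Hne (S k) ltac:(lia) (comp_family T k (x n)) z) as P.
    assert (E : T (S k) z = z) by (apply (Hz (S k)); lia).
    rewrite E in P. exact P. }
  assert (monod : forall d j n, (j + d <= m)%nat -> a (j + d)%nat n <= a j n).
  { induction d as [|d IH]; intros j n Hjd.
    - rewrite Nat.add_0_r. lra.
    - rewrite Nat.add_succ_r. pose proof (mono1 (j + d)%nat n ltac:(lia)).
      pose proof (IH j n ltac:(lia)). lra. }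
  assert (S1 : forall k, (S k <= m)%nat -> Un_cv (fun n => a k n - a (S k) n) 0).
  { intros k Hk. apply squeeze with (v := fun n => a 0%nat n - a m n); [| exact Hcv].
    intro n. pose proof (mono1 k n Hk). pose proof (monod k 0%nat n ltac:(lia)).
    pose proof (monod (m - S k)%nat (S k) n ltac:(lia)) as P.
    replace (S k + (m - S k))%nat with m in P by lia. simpl in *. lra. }
  assert (S2 : forall k, (k <= m)%nat -> bounded_seq (fun n => comp_family T k (x n))).
  { intros k Hk. exists (M + 2 * hnorm z). intro n.
    pose proof (nbound (comp_family T k (x n)) z).
    pose proof (monod k 0%nat n ltac:(lia)). simpl in *.
    pose proof (nbound2 (x n) z). pose proof (HM n). unfold a in *. simpl in *. lra. }
  assert (S3 : forall k, (S k <= m)%nat ->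
            Un_cv (fun n => dist_set (Fix (T (S k))) (comp_family T k (x n))) 0).
  { intros k Hk. destruct (Hp (S k) ltac:(lia)) as [_ [_ H3]]. apply H3.
    - apply S2; lia.
    - exact (S1 k Hk). }
  assert (S4 : forall k, (S k <= m)%nat ->
            Un_cv (fun n => hnorm (hsub (comp_family T (S k) (x n)) (comp_family T k (x n)))) 0).
  { intros k Hk.
    apply squeeze with (v := fun n => dist_set (Fix (T (S k))) (comp_family T k (x n)) +
                                     dist_set (Fix (T (S k))) (comp_family T k (x n))).
    - intro n. split; [apply hnorm_nonneg|].
      pose proof (step_bound (T (S k)) z (comp_family T k (x n)) (Hne (S k) ltac:(lia))
                   (Hz (S k) ltac:(lia))). simpl. lra.
    - pose proof (CV_plus _ _ _ _ (S3 k Hk) (S3 k Hk)) as P. rewrite Rplus_0_r in P. exact P. }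
  assert (S5 : forall k, (k <= m)%nat ->
            Un_cv (fun n => hnorm (hsub (comp_family T k (x n)) (x n))) 0).
  { induction k as [|k IH]; intros Hk.
    - apply squeeze with (v := fun _ => 0); [| apply cv_const0].
      intro n. simpl. rewrite nself. lra.
    - apply squeeze with (v := fun n => hnorm (hsub (comp_family T (S k) (x n)) (comp_family T k (x n)))
                                  + hnorm (hsub (comp_family T k (x n)) (x n))).
      + intro n. split; [apply hnorm_nonneg| apply tri].
      + pose proof (CV_plus _ _ _ _ (S4 k Hk) (IH ltac:(lia))) as P.
        rewrite Rplus_0_r in P. exact P. }
  assert (S6 : forall i, In i (seq 1 m) ->
            Un_cv (fun n => dist_set (Fix (T i)) (x n)) 0 /\
            forall n, 0 <= dist_set (Fix (T i)) (x n)).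
  { intros i Hi. apply in_seq in Hi. destruct i as [|k]; [lia|].
    assert (Hne' : exists p, Fix (T (S k)) p) by (exists z; apply Hz; lia).
    split.
    - apply squeeze with (v := fun n => dist_set (Fix (T (S k))) (comp_family T k (x n)) +
                                       hnorm (hsub (comp_family T k (x n)) (x n))).
      + intro n. split; [apply dist_ge0; auto|].
        pose proof (dist_lip (Fix (T (S k))) (x n) (comp_family T k (x n)) Hne').
        rewrite nsym in H. exact H.
      + pose proof (CV_plus _ _ _ _ (S3 k ltac:(lia)) (S5 k ltac:(lia))) as P.
        rewrite Rplus_0_r in P. exact P.
    - intro n. apply dist_ge0; auto. }
  apply Hr; [exists M; auto|].
  unfold max_dist. apply (max_cv (fun i n => dist_set (Fix (T i)) (x n))). exact S6.
Qed.

Theorem proposition7p8 (X : HilbertSpace) (m : nat) (T : nat -> X -> X) (z : X) :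
  (forall i, (1 <= i <= m)%nat -> nonexpansive (T i)) ->
  inter_family m (fun i => Fix (T i)) z ->
  (forall i, (1 <= i <= m)%nat -> projective (T i) z) ->
  boundedly_regular m (fun i => Fix (T i)) ->
  projective (comp_family T m) z /\
  (forall x0 : X, exists p : X,
      inter_family m (fun i => Fix (T i)) p /\
      converges_to (fun n => Nat.iter n (comp_family T m) x0) p).
Proof.
  intros Hne Hz Hp Hr.
  set (Z := inter_family m (fun i => Fix (T i))).
  assert (HZne : exists p, Z p) by (exists z; exact Hz).
  assert (ZF : forall p, Z p -> comp_family T m p = p).
  { intros p Hpz. apply comp_fix. intros i Hi. apply (Hpz i Hi). }
  assert (FN := comp_nonexp T m Hne).
  split.
  { split; [exact FN|]. split; [apply ZF; exact Hz|].
    intros x Hb Hc.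
    apply squeeze with (v := fun n => dist_set Z (x n)).
    - intro n. split.
      + apply dist_ge0. exists z. apply ZF; exact Hz.
      + apply dist_mono; auto.
    - exact (key X m T z Hne Hz Hp Hr x Hb Hc). }
  intros x0.
  set (F := comp_family T m).
  set (u := fun k => Nat.iter k F x0).
  assert (fej1 : forall p, Z p -> forall k, hnorm (hsub (u (S k)) p) <= hnorm (hsub (u k) p)).
  { intros p Hpz k. pose proof (FN (u k) p) as P. assert (Fp : comp_family T m p = p) by (apply ZF; auto).
    rewrite Fp in P. exact P. }
  assert (fej : forall p, Z p -> forall k d, hnorm (hsub (u (k + d)%nat) p) <= hnorm (hsub (u k) p)).
  { intros p Hpz k d. induction d as [|d IH].
    - rewrite Nat.add_0_r. lra.
    - rewrite Nat.add_succ_r. pose proof (fej1 p Hpz (k + d)%nat). lra. }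
  assert (Hb : bounded_seq u).
  { exists (hnorm (hsub x0 z) + hnorm z). intro n.
    pose proof (nbound (u n) z). pose proof (fej z Hz 0%nat n). simpl in *. lra. }
  destruct (decreasing_cv (fun k => hnorm (hsub (u k) z))) as [L HL].
  { intro n. apply fej1; exact Hz. }
  { exists 0. intros r [i ->]. pose proof (hnorm_nonneg _ (hsub (u i) z)). unfold opp_seq. lra. }
  assert (Hdiff : Un_cv (fun k => hnorm (hsub (u k) z) - hnorm (hsub (u (S k)) z)) 0).
  { intros eps He. destruct (HL (eps / 2) ltac:(lra)) as [N HN]. exists N. intros n Hn.
    pose proof (HN n Hn). pose proof (HN (S n) ltac:(lia)).
    unfold R_dist, Rabs in *.
    destruct (Rcase_abs (hnorm (hsub (u n) z) - L));
    destruct (Rcase_abs (hnorm (hsub (u (S n)) z) - L));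
    destruct (Rcase_abs (hnorm (hsub (u n) z) - hnorm (hsub (u (S n)) z) - 0)); lra. }
  assert (HdZ := key X m T z Hne Hz Hp Hr u Hb Hdiff).
  assert (HdZ' : forall d, 0 < d -> exists N, forall n, (N <= n)%nat -> dist_set Z (u n) < d).
  { intros d Hd. apply sq_abs; auto. intro n. apply dist_ge0; auto. }
  destruct (hs_complete X u) as [l Hl].
  { intros eps He. destruct (HdZ' (eps / 4) ltac:(lra)) as [N HN].
    destruct (dist_approx Z (u N) (eps / 4) HZne ltac:(lra)) as [p [Zp Hpn]].
    pose proof (HN N (le_n N)).
    exists N. intros n k Hn Hk.
    change (hnorm (hsub (u n) (u k)) < eps).
    pose proof (fej p Zp N (n - N)%nat) as P1. replace (N + (n - N))%nat with n in P1 by lia.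
    pose proof (fej p Zp N (k - N)%nat) as P2. replace (N + (k - N))%nat with k in P2 by lia.
    pose proof (tri (u n) p (u k)). rewrite (nsym p (u k)) in H0. lra. }
  exists l. split.
  2:{ exact Hl. }
  intros i Hi. unfold Fix. apply nzero.
  apply Rle_antisym; [| apply hnorm_nonneg].
  apply Rle_plus_epsilon. intros eps He.
  destruct (Hl (eps / 6) ltac:(lra)) as [N1 HN1].
  destruct (HdZ' (eps / 6) ltac:(lra)) as [N2 HN2].
  set (n := Nat.max N1 N2).
  pose proof (HN1 n ltac:(lia)) as A1. change (hnorm (hsub (u n) l) < eps / 6) in A1.
  pose proof (HN2 n ltac:(lia)) as A2.
  destruct (dist_approx Z (u n) (eps / 6) HZne ltac:(lra)) as [p [Zp Hpn]].
  pose proof (tri p (u n) l). rewrite (nsym p (u n)) in H.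
  assert (Tp : T i p = p) by exact (Zp i Hi).
  pose proof (tri (T i l) (T i p) l). rewrite Tp in H0.
  pose proof (Hne i Hi l p). rewrite Tp in H1. rewrite (nsym l p) in H1.
  lra.
Qed.
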